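(* Let $q\in\mathbb{C}^\times$ be not a root of unity, $n\ge2$, $\mathbf{Q}=(Q_1,\dots,Q_{n-1})\in\mathbb{C}^{n-1}$. Every one-dimensional $U_q(\mathfrak{sl}_n^{\langle\mathbf{Q}\rangle}[x])$-module is isomorphic to $\mathcal{D}^{\langle\mathbf{Q}\rangle}_{\boldsymbol\beta}$ for some $\boldsymbol\beta\in\mathbb{B}^{\langle\mathbf{Q}\rangle}$.
   Context: Let $I=\{1,\dots,n-1\}$, $(a_{ij})$ the Cartan matrix of type $A_{n-1}$, $[k]=(q^k-q^{-k})/(q-q^{-1})$, $[x,y]=xy-yx$. $U_q(\mathfrak{sl}_n^{\langle\mathbf{Q}\rangle}[x])$ is the $\mathbb{C}$-algebra with generators $X^{\pm}_{i,t},J_{i,t},K_i^{\pm}$ ($i\in I,t\ge0$) and relations: all $K_i^+$, $J_{j,t}$ pairwise commute; $K_i^+K_i^-=1=K_i^-K_i^+$; $(K_i^-)^2=1-(q-q^{-1})J_{i,0}$; $X^{\pm}_{i,t+1}X^{\pm}_{j,s}-q^{\pm a_{ij}}X^{\pm}_{j,s}X^{\pm}_{i,t+1}=q^{\pm a_{ij}}X^{\pm}_{i,t}X^{\pm}_{j,s+1}-X^{\pm}_{j,s+1}X^{\pm}_{i,t}$; $K_i^+X^{\pm}_{j,t}K_i^-=q^{\pm a_{ij}}X^{\pm}_{j,t}$; $q^{\pm a_{ij}}J_{i,0}X^{\pm}_{j,t}-q^{\mp a_{ij}}X^{\pm}_{j,t}J_{i,0}=[\pm a_{ij}]X^{\pm}_{j,t}$;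 $[J_{i,s+1},X^{\pm}_{j,t}]=q^{\pm a_{ij}}J_{i,s}X^{\pm}_{j,t+1}-q^{\mp a_{ij}}X^{\pm}_{j,t+1}J_{i,s}$; $[X^+_{i,t},X^-_{j,s}]=\delta_{ij}K_i^+(J_{i,s+t}-Q_iJ_{i,s+t+1})$; $[X^\pm_{i,t},X^\pm_{j,s}]=0$ if $j\ne i,i\pm1$; $X^{\pm}_{i\pm1,u}(X^{\pm}_{i,s}X^{\pm}_{i,t}+X^{\pm}_{i,t}X^{\pm}_{i,s})+(X^{\pm}_{i,s}X^{\pm}_{i,t}+X^{\pm}_{i,t}X^{\pm}_{i,s})X^{\pm}_{i\pm1,u}=(q+q^{-1})(X^{\pm}_{i,s}X^{\pm}_{i\pm1,u}X^{\pm}_{i,t}+X^{\pm}_{i,t}X^{\pm}_{i\pm1,u}X^{\pm}_{i,s})$. $\mathbb{B}^{\langle\mathbf{Q}\rangle}=\prod_{i\in I}\mathbb{B}^{\langle Q_i\rangle}$ with $\mathbb{B}^{\langle Q\rangle}=\{\pm1\}$ if $Q=0$ and $\mathbb{C}^\times$ if $Q\ne0$. For $\boldsymbol\beta=(\beta_i)\in\mathbb{B}^{\langle\mathbf{Q}\rangle}$, $\mathcal{D}^{\langle\mathbf{Q}\rangle}_{\boldsymbol\beta}=\mathbb{C}v$ is the one-dimensional module with $X^\pm_{i,t}v=0$, $K_i^\pm v=\beta_i^{\pm1}v$, and $J_{i,t}v=0$ if $Q_i=0$, $J_{i,t}v=\frac{1-\beta_i^{-2}}{q-q^{-1}}Q_i^{-t}v$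 if $Q_i\ne0$ ($i\in I$, $t\ge0$); this is a well-defined module. *)

(* Defs.v *)
From HB Require Import structures.
From mathcomp Require Import all_boot all_order all_algebra.
From mathcomp Require Import complex.
From mathcomp Require Import Rstruct.
Set Implicit Arguments. Unset Strict Implicit. Unset Printing Implicit Defensive.
Import Order.TTheory GRing.Theory Num.Theory.
Local Open Scope ring_scope.

Notation C := (complex Rdefinitions.R).

(* The index set I = {1,...,n-1} is modelled as 'I_m with m = n-1;
   the ordinal i stands for the index i+1. *)

Definition cartan (m : nat) (i j : 'I_m) : int :=
  if i == j then (2 : int)
  else if (i.+1 == j :> nat) || (j.+1 == i :> nat) then (-1 : int) else (0 : int).

Definition sgn (e : bool) : int := if e then (1 : int) else (-1 : int).

Definition qint (q : C) (k : int) : C := (q ^ k - q ^ (- k)) / (q - q^-1).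

Record rep (m d : nat) := Rep {
  Xp : 'I_m -> nat -> 'M[C]_d;
  Xm : 'I_m -> nat -> 'M[C]_d;
  Jg : 'I_m -> nat -> 'M[C]_d;
  Kp : 'I_m -> 'M[C]_d;
  Km : 'I_m -> 'M[C]_d
}.

Definition Xs (m d : nat) (V : rep m d) (e : bool) : 'I_m -> nat -> 'M[C]_d :=
  if e then Xp V else Xm V.

Definition is_rep (q : C) (m : nat) (Q : 'I_m -> C) (d : nat) (V : rep m d) : Prop :=
  let a := @cartan m in
  let one := (1%:M : 'M[C]_d) in
  (forall i j, Kp V i *m Kp V j = Kp V j *m Kp V i) /\
  (forall i j t, Kp V i *m Jg V j t = Jg V j t *m Kp V i) /\
  (forall i j s t, Jg V i s *m Jg V j t = Jg V j t *m Jg V i s) /\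
  (forall i, Kp V i *m Km V i = one /\ Km V i *m Kp V i = one) /\
  (forall i, Km V i *m Km V i = one - (q - q^-1) *: Jg V i 0) /\
  (forall (e : bool) i j t s,
     let X := Xs V e in
     let qa := q ^ (sgn e * a i j) in
     let qma := q ^ (- (sgn e * a i j)) in
     (X i t.+1 *m X j s - qa *: (X j s *m X i t.+1)
        = qa *: (X i t *m X j s.+1) - X j s.+1 *m X i t) /\
     (Kp V i *m X j t *m Km V i = qa *: X j t) /\
     (qa *: (Jg V i 0 *m X j t) - qma *: (X j t *m Jg V i 0)
        = qint q (sgn e * a i j) *: X j t) /\
     (Jg V i s.+1 *m X j t - X j t *m Jg V i s.+1
        = qa *: (Jg V i s *m X j t.+1) - qma *: (X j t.+1 *m Jg V i s))) /\
  (forall i j t s,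
     Xp V i t *m Xm V j s - Xm V j s *m Xp V i t
       = if i == j then Kp V i *m (Jg V i (s + t) - Q i *: Jg V i (s + t).+1)
         else 0) /\
  (forall (e : bool) (i j : 'I_m) t s,
     j != i -> (j : nat) != i.+1 -> (j : nat).+1 != i ->
     Xs V e i t *m Xs V e j s = Xs V e j s *m Xs V e i t) /\
  (forall (e : bool) (i j : 'I_m) s t u,
     ((j : nat) == i.+1) || ((j : nat).+1 == i) ->
     let X := Xs V e in
     let S := X i s *m X i t + X i t *m X i s in
     X j u *m S + S *m X j u
       = (q + q^-1) *: (X i s *m X j u *m X i t + X i t *m X j u *m X i s)).

Definition rep_iso (m d : nat) (V W : rep m d) : Prop :=
  exists P : 'M[C]_d, P \in unitmx /\
    (forall i t, P *m Xp V i t = Xp W i t *m P) /\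
    (forall i t, P *m Xm V i t = Xm W i t *m P) /\
    (forall i t, P *m Jg V i t = Jg W i t *m P) /\
    (forall i, P *m Kp V i = Kp W i *m P) /\
    (forall i, P *m Km V i = Km W i *m P).

Definition inB (m : nat) (Q : 'I_m -> C) (beta : 'I_m -> C) : Prop :=
  forall i, if Q i == 0 then (beta i = 1 \/ beta i = -1) else beta i != 0.

Definition Dmod (q : C) (m : nat) (Q : 'I_m -> C) (beta : 'I_m -> C) : rep m 1 :=
  @Rep m 1
    (fun _ _ => 0) (fun _ _ => 0)
    (fun i t => (if Q i == 0 then 0
                 else (1 - (beta i)^-2) / (q - q^-1) * (Q i) ^- t)%:M)
    (fun i => (beta i)%:M) (fun i => (beta i)^-1%:M).

(* Main.v *)
Require Import Defs.
From HB Require Import structures.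
From mathcomp Require Import all_boot all_order all_algebra.
From mathcomp Require Import complex Rstruct.
From mathcomp Require Import ring.
Import Order.TTheory GRing.Theory Num.Theory.
Local Open Scope ring_scope.

Lemma e11M (A B : 'M[C]_1) : (A *m B) 0 0 = A 0 0 * B 0 0.
Proof. by rewrite mxE big_ord1. Qed.

Lemma e11B (A B : 'M[C]_1) : (A - B) 0 0 = A 0 0 - B 0 0.
Proof. by rewrite !mxE. Qed.

Lemma e11Z (a : C) (A : 'M[C]_1) : (a *: A) 0 0 = a * A 0 0.
Proof. by rewrite !mxE. Qed.

Lemma e11S (a : C) : (a%:M : 'M[C]_1) 0 0 = a.
Proof. by rewrite !mxE /= mulr1n. Qed.

Lemma e11eq (A B : 'M[C]_1) : A 0 0 = B 0 0 -> A = B.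
Proof. by move=> h; apply/matrixP => i j; rewrite !ord1. Qed.

Lemma e00 {A B : 'M[C]_1} : A = B -> A 0 0 = B 0 0.
Proof. by move=> ->. Qed.

Theorem mainTheorem12 (q : C) (n : nat) (Q : 'I_n.-1 -> C) :
  q != 0 -> (forall k : nat, (0 < k)%N -> q ^+ k != 1) -> (2 <= n)%N ->
  forall V : rep n.-1 1, is_rep q Q V ->
  exists beta : 'I_n.-1 -> C, inB Q beta /\ rep_iso V (Dmod q Q beta).
Proof.
move=> q0 qroot n2 V [HKK [HKJ [HJJ [HKinv [HKm2 [HX [HXX _]]]]]]].
have q2 : q ^+ 2 != 1 by apply: qroot.
have H0 : forall i, Kp V i 0 0 * Km V i 0 0 = 1.
  move=> i; have [h _] := HKinv i; have := e00 h.
  by rewrite /= e11M mxE.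
have HX0 : forall e i t, Xs V e i t 0 0 = 0.
  move=> e i t; have [_ [h _]] := HX e i i t t.
  have := e00 h; clear h; rewrite /= !e11M mxE.
  rewrite mulrAC H0 mul1r.
  have -> : sgn e * cartan i i = (if e then 2%:Z else - 2%:Z).
    by rewrite /cartan eqxx; case: e.
  case: e => h2; apply/eqP; apply: contraT => hx.
    have : q ^ 2%:Z = 1 by apply: (mulIf hx); rewrite mul1r -h2.
    by rewrite -exprnP => /eqP; rewrite (negbTE q2).
  have : q ^ (- 2%:Z) = 1 by apply: (mulIf hx); rewrite mul1r -h2.
  rewrite -invr_expz => /eqP; rewrite invr_eq1 -exprnP.
  by rewrite (negbTE q2).
have HJrec : forall i u, Jg V i u 0 0 = Q i * Jg V i u.+1 0 0.
  move=> i u; have h := HXX i i 0%N u.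
  have := e00 h; rewrite eqxx /= !e11B !e11M e11B e11Z.
  have := HX0 true i 0%N; have := HX0 false i u; rewrite /= => -> ->.
  rewrite addn0 !mulr0 subr0 => /esym /eqP.
  rewrite mulf_eq0 => /orP [hk|]; last by rewrite subr_eq0 => /eqP.
  by have := H0 i; rewrite (eqP hk) mul0r => /eqP; rewrite eq_sym oner_eq0.
have HKm : forall i, Km V i 0 0 * Km V i 0 0 = 1 - (q - q^-1) * Jg V i 0%N 0 0.
  move=> i; have := e00 (HKm2 i).
  by rewrite /= e11M !mxE /= mulr1n.
have k0 : forall i, Kp V i 0 0 != 0.
  by move=> i; apply/eqP => hk; have := H0 i; rewrite hk mul0r => /eqP; rewrite eq_sym oner_eq0.
have kmE : forall i, Km V i 0 0 = (Kp V i 0 0)^-1.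
  by move=> i; rewrite -[LHS]mul1r -(mulVf (k0 i)) -mulrA H0 mulr1.
exists (fun i => Kp V i 0 0); split.
  move=> i; case: eqP => HQ; last exact: k0.
  have j0 : Jg V i 0%N 0 0 = 0 by rewrite HJrec HQ mul0r.
  have := HKm i; rewrite j0 mulr0 subr0 => /eqP.
  rewrite -subr_eq0.
  have -> : Km V i 0 0 * Km V i 0 0 - 1 = (Km V i 0 0 - 1) * (Km V i 0 0 + 1) by ring.
  rewrite mulf_eq0 => /orP [] /eqP.
    move=> h; have : Km V i 0 0 = 1 by apply/eqP; rewrite -subr_eq0 h.
    by move=> e1; have := H0 i; rewrite e1 mulr1; left.
  move=> h; have : Km V i 0 0 = -1 by apply/eqP; rewrite -(subr_eq0 _ (-1)) opprK h.
  by move=> e1; have := H0 i; rewrite e1 mulrN1 => /(congr1 -%R); rewrite opprK; right.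
exists 1%:M; split; first exact: unitmx1.
split; [|split; [|split; [|split]]].
- move=> i t; rewrite mul1mx mulmx1; apply: e11eq; have := HX0 true i t.
  by rewrite /= mxE.
- move=> i t; rewrite mul1mx mulmx1; apply: e11eq; have := HX0 false i t.
  by rewrite /= mxE.
- move=> i t; rewrite mul1mx mulmx1; apply: e11eq; rewrite /= mxE /= mulr1n.
  case: eqP => HQ.
    by rewrite HJrec HQ mul0r.
  have qq : q - q^-1 != 0.
    rewrite subr_eq0; apply: contra q2 => /eqP h.
    by rewrite expr2 {1}h mulVf.
  elim: t => [|t IH].
    have := HKm i; rewrite kmE expr0 invr1 mulr1 => h.
    have hk := k0 i.
    have hJ : Jg V i 0 0 0 = (1 - (Kp V i 0 0)^-1 / Kp V i 0 0) / (q - q^-1).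
      by rewrite h; field; rewrite q0 subr_eq0 -expr2 q2.
    by rewrite hJ; field; rewrite q0 subr_eq0 -expr2 q2 hk.
  have hQ : Q i != 0 by apply/eqP.
  apply: (mulfI hQ); rewrite -HJrec IH (exprS (Q i) t).
  have hX := expf_neq0 t hQ.
  move: (Q i ^+ t) hX => X hX.
  by field; rewrite hX hQ q0 subr_eq0 -expr2 q2 k0.
- move=> i; rewrite mul1mx mulmx1; apply: e11eq; by rewrite /= mxE /= mulr1n.
- move=> i; rewrite mul1mx mulmx1; apply: e11eq; by rewrite /= mxE /= mulr1n kmE.
Qed.
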